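(* Let $\Delta^{-1},\varepsilon\gg p\gg\mu\gg d^{-1}$. Let $G$ be a graph with minimum degree $\delta(G)\ge\varepsilon d$ that contains no $p$-cut-dense subgraph of order $\mu d$. Then every set $S\subseteq V(G)$ with $|S|\le 10d$ satisfies $|N(S)|\ge 10\Delta|S|$.
   Context: A graph $F$ is $p$-cut-dense if for every partition $V(F)=A\cup B$ into disjoint sets, the number of edges of $F$ between $A$ and $B$ is at least $p|A||B|$. $N(S)$ is the set of vertices adjacent to some vertex of $S$. The hierarchy means: given $\Delta,\varepsilon$, $p$ is sufficiently small; given $p$, $\mu$ is sufficiently small; given $\mu$, $d$ is sufficiently large. *)

(* Defs.v *)
From mathcomp Require Import all_boot all_order all_algebra.
From mathcomp Require Import reals.
Set Implicit Arguments. Unset Strict Implicit. Unset Printing Implicit Defensive.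
Import Order.TTheory GRing.Theory Num.Theory.
Local Open Scope ring_scope.

Definition simple_graph (T : finType) (e : rel T) := symmetric e /\ irreflexive e.

Definition nbhd (T : finType) (e : rel T) (S : {set T}) : {set T} :=
  [set v | [exists u in S, e u v]].

Definition min_deg_ge (R : realFieldType) (T : finType) (e : rel T) (c : R) :=
  forall v : T, c <= (#|[set u | e v u]|)%:R.

Definition e_between (T : finType) (F : rel T) (A B : {set T}) : nat :=
  #|[set xy : T * T | (xy.1 \in A) && (xy.2 \in B) && F xy.1 xy.2]|.

Definition is_subgraph (T : finType) (e : rel T) (U : {set T}) (F : rel T) :=
  symmetric F /\ (forall x y, F x y -> e x y) /\ (forall x y, F x y -> (x \in U) && (y \in U)).

Definition cut_dense (R : realFieldType) (T : finType) (U : {set T}) (F : rel T) (p : R) :=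
  forall A B : {set T}, A :|: B = U -> [disjoint A & B] ->
    p * (#|A|)%:R * (#|B|)%:R <= (e_between F A B)%:R.

Definition has_cut_dense_subgraph (R : realFieldType) (T : finType) (e : rel T) (p m : R) :=
  exists (U : {set T}) (F : rel T),
    is_subgraph e U F /\ m <= (#|U|)%:R /\ cut_dense U F p.

(* Main.v *)
Require Import Defs.
From mathcomp Require Import all_boot all_order all_algebra.
From mathcomp Require Import reals ring lra.
From Stdlib Require Import Classical.
Import Order.TTheory GRing.Theory Num.Theory.
Local Open Scope ring_scope.

Lemma card_pairs (T : finType) (A B : {set T}) (G : rel T) :
  #|[set xy : T * T | (xy.1 \in A) && (xy.2 \in B) && G xy.1 xy.2]| =
  (\sum_(x in A) \sum_(y in B) (G x y : nat))%N.
Proof.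
have -> : (\sum_(x in A) \sum_(y in B) (G x y : nat))%N =
   (\sum_(x : T) \sum_(y : T) (((x \in A) && (y \in B) && G x y) : nat))%N.
  rewrite (big_mkcond (fun x => x \in A)) /=; apply: eq_bigr => x _.
  case: (boolP (x \in A)) => xA /=; last by rewrite big1.
  rewrite (big_mkcond (fun y => y \in B)) /=; apply: eq_bigr => y _.
  by case: (y \in B).
rewrite pair_bigA /= -sum1_card big_mkcond /=; apply: eq_bigr => [[x y]] _.
by rewrite inE /=; case: ifP.
Qed.

Definition eb (R : realType) {T : finType} (e : rel T) (A B : {set T}) : R :=
  \sum_(x in A) \sum_(y in B) ((e x y : nat)%:R).
Definition Fi {T : finType} (e : rel T) (X : {set T}) : rel T :=
  fun x y => [&& e x y, x \in X & y \in X].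

Lemma sumU (R : realType) {T : finType} (F : T -> R) (A B : {set T}) :
  [disjoint A & B] ->
  \sum_(i in A :|: B) F i = \sum_(i in A) F i + \sum_(i in B) F i.
Proof. by move=> d; rewrite -bigU //; apply: eq_bigl => i; rewrite !inE. Qed.

Lemma eb_split (R : realType) {T : finType} (e : rel T) (A B : {set T}) :
  symmetric e -> [disjoint A & B] ->
  eb R e (A :|: B) (A :|: B) = eb R e A A + eb R e B B + 2 * eb R e A B.
Proof.
move=> se dAB; rewrite /eb sumU //.
under eq_bigr => x _ do rewrite sumU //.
under [X in _ + X]eq_bigr => x _ do rewrite sumU //.
rewrite !big_split /=.
have -> : \sum_(i in B) \sum_(i0 in A) ((e i i0 : nat)%:R : R) =
   \sum_(x in A) \sum_(y in B) (e x y : nat)%:R.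
  rewrite exchange_big /=; apply: eq_bigr => x _; apply: eq_bigr => y _.
  by rewrite se.
ring.
Qed.

Lemma eb_le_sq (R : realType) {T : finType} (e : rel T) (A : {set T}) :
  eb R e A A <= (#|A|)%:R * (#|A|)%:R.
Proof.
apply: (@le_trans _ _ (\sum_(x in A) \sum_(y in A) (1:R))).
  apply: ler_sum => x _; apply: ler_sum => y _.
  by case: (e x y); rewrite /= ?ler01.
by rewrite !sumr_const mulr_natr.
Qed.

Lemma eb_between (R : realType) {T : finType} (e : rel T) (X A B : {set T}) :
  A :|: B = X -> (e_between (Fi e X) A B)%:R = eb R e A B.
Proof.
move=> hU; rewrite /e_between card_pairs natr_sum /eb; apply: eq_bigr => x xA.
rewrite natr_sum; apply: eq_bigr => y yB.
have xX : x \in X by rewrite -hU inE xA.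
have yX : y \in X by rewrite -hU inE yB orbT.
by rewrite /Fi xX yX !andbT.
Qed.

Definition gpot {R : realType} (al m c : R) := al * c ^+ 2 + al * m * c.

Lemma grow (R : realType) {T : finType} (e : rel T) (p al m : R) :
  symmetric e -> p <= al ->
  forall n (X : {set T}), (#|X| <= n)%N -> X != set0 ->
  gpot al m (#|X|)%:R <= eb R e X X ->
  exists Y : {set T}, [/\ Y != set0, gpot al m (#|Y|)%:R <= eb R e Y Y
     & cut_dense Y (Fi e Y) p].
Proof.
move=> se hp; elim=> [|n IH] X hX X0 hg.
  by move: X0; rewrite -card_gt0; case: #|X| hX.
case: (Classical_Prop.classic (cut_dense X (Fi e X) p)) => hcd.
  by exists X.
have [A [B [hU hd hlt]]] : exists A B, [/\ A :|: B = X, [disjoint A & B] &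
    ~ (p * (#|A|)%:R * (#|B|)%:R <= (e_between (Fi e X) A B)%:R)].
  apply: Classical_Prop.NNPP => H; apply: hcd => A B hU hd.
  apply: Classical_Prop.NNPP => hn; apply: H; by exists A, B.
rewrite (@eb_between R _ e X A B hU) in hlt.
have A0 : A != set0.
  apply/negP => /eqP A0; apply: hlt; rewrite A0 cards0 mulr0 mul0r.
  by rewrite /eb big1 // => x; rewrite inE.
have B0 : B != set0.
  apply/negP => /eqP B0; apply: hlt; rewrite B0 cards0 mulr0.
  by rewrite /eb big1 // => x _; rewrite big1 // => y; rewrite inE.
have hlt' : eb R e A B < p * (#|A|)%:R * (#|B|)%:R by rewrite ltNge; apply/negP.
have cX : #|X| = (#|A| + #|B|)%N.
  by rewrite -hU cardsU (disjoint_setI0 hd) cards0 subn0.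
move: hg; rewrite -hU eb_split // hU cX natrD /gpot => hg.
have a0 : 0 < (#|A|)%:R :> R by rewrite ltr0n card_gt0.
have b0 : 0 < (#|B|)%:R :> R by rewrite ltr0n card_gt0.
have hab : p * (#|A|)%:R * (#|B|)%:R <= al * (#|A|)%:R * (#|B|)%:R :> R.
  by rewrite -!mulrA ler_wpM2r // mulr_ge0 // ltW.
have : gpot al m (#|A|)%:R <= eb R e A A \/ gpot al m (#|B|)%:R <= eb R e B B.
  apply: Classical_Prop.NNPP => H.
  have h1 : eb R e A A < gpot al m (#|A|)%:R.
    by rewrite ltNge; apply/negP => h; apply: H; left.
  have h2 : eb R e B B < gpot al m (#|B|)%:R.
    by rewrite ltNge; apply/negP => h; apply: H; right.
  move: h1 h2; rewrite /gpot => h1 h2.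
  set a := (#|A|)%:R in hg hab hlt' h1 h2 a0.
  set b := (#|B|)%:R in hg hab hlt' h1 h2 b0.
  have : (al * (a + b) ^+ 2 + al * m * (a + b)) = al * a ^+ 2 + al * m * a + (al * b ^+ 2 + al * m * b) + 2 * (al * a * b) by ring.
  lra.
have hA : (#|A| <= n)%N.
  rewrite -ltnS; apply: leq_trans hX; rewrite cX -addn1 leq_add2l; by rewrite card_gt0.
have hB : (#|B| <= n)%N.
  rewrite -ltnS; apply: leq_trans hX; rewrite cX -add1n leq_add2r; by rewrite card_gt0.
case=> h.
  by have [Y [Y0 hY cY]] := IH A hA A0 h; exists Y.
by have [Y [Y0 hY cY]] := IH B hB B0 h; exists Y.
Qed.

Theorem lemma3p15 (R : realType) :
  forall Delta eps : R, 0 < Delta -> 0 < eps ->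
  exists p0 : R, 0 < p0 /\ forall p : R, 0 < p -> p <= p0 ->
  exists mu0 : R, 0 < mu0 /\ forall mu : R, 0 < mu -> mu <= mu0 ->
  exists d0 : R, forall d : R, d0 <= d ->
  forall (T : finType) (e : rel T),
    simple_graph e ->
    min_deg_ge e (eps * d) ->
    ~ has_cut_dense_subgraph e p (mu * d) ->
    forall S : {set T}, (#|S|)%:R <= 10 * d ->
      10 * Delta * (#|S|)%:R <= (#|nbhd e S|)%:R.
Proof.
move=> Delta eps hD he.
pose K : R := 1 + 10 * Delta.
have K0 : 0 < K by rewrite /K; lra.
pose al : R := eps / (K * (10 * K + 1)).
have al0 : 0 < al by rewrite /al divr_gt0 // mulr_gt0 //; lra.
have alK : al * (K * (10 * K + 1)) = eps.
  by rewrite /al mulfVK // mulf_neq0 ?lt0r_neq0 //; lra.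
exists al; split => // p p0 hp; exists al; split => // mu mu0 hmu.
exists 0 => d d0 T e [se ie] hdeg ncd S hS.
pose s : R := (#|S|)%:R.
have s0 : 0 <= s by rewrite /s ler0n.
case: (leP (10 * Delta * s) (#|nbhd e S|)%:R) => // hN.
exfalso.
have Sn0 : S != set0.
  apply/negP => /eqP S0; move: hN; rewrite /s S0 cards0 mulr0 => h.
  by move: h; rewrite ltNge ler0n.
pose W := S :|: (nbhd e S :\: S).
have dW : [disjoint S & nbhd e S :\: S].
  rewrite -setI_eq0; apply/eqP/setP => y; rewrite !inE.
  by case: (y \in S); rewrite ?andbF.
have cW : (#|W| <= #|S| + #|nbhd e S|)%N.
  rewrite /W cardsU (disjoint_setI0 dW) cards0 subn0 leq_add2l.
  exact: subset_leq_card (subsetDl _ _).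
pose w : R := (#|W|)%:R.
have hw : w <= K * s.
  have : w <= s + (#|nbhd e S|)%:R by rewrite /w /s -natrD ler_nat.
  rewrite /K; lra.
have hdegx : forall x, x \in S -> eps * d <= \sum_(y in W) ((e x y : nat)%:R : R).
  move=> x xS; apply: (le_trans (hdeg x)).
  rewrite -sum1_card natr_sum (big_mkcond (fun y => y \in W)) big_mkcond /=.
  rewrite [X in X <= _]big_mkcond /=; apply: ler_sum => y _; rewrite inE.
  case exy: (e x y); last by case: (y \in W).
  have -> : y \in W.
    rewrite /W !inE; case: (y \in S) => //=.
    by apply/existsP; exists x; rewrite xS exy.
  by [].
have hebW : eps * d * s <= eb R e W W.
  rewrite /eb /W sumU //.
  have h2 : 0 <= \sum_(x in nbhd e S :\: S) \sum_(y in S :|: (nbhd e S :\: S)) ((e x y : nat)%:R : R).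
    by apply: sumr_ge0 => i _; apply: sumr_ge0 => j _; rewrite ler0n.
  have h1 : eps * d * s <= \sum_(x in S) \sum_(y in S :|: (nbhd e S :\: S)) ((e x y : nat)%:R : R).
    rewrite /s mulr_natr -sumr_const; apply: ler_sum => i iS; exact: hdegx.
  lra.
have w0 : 0 <= w by rewrite /w ler0n.
have hg : gpot al d w <= eb R e W W.
  apply: le_trans hebW.
  have h1 : w * (w + d) <= K * s * (10 * K * d + d).
    apply: ler_pM => //; first by lra.
    have : K * s <= K * (10 * d) by rewrite ler_pM2l.
    lra.
  have : al * (w * (w + d)) <= al * (K * s * (10 * K * d + d)) by rewrite ler_pM2l.
  have -> : al * (K * s * (10 * K * d + d)) = (al * (K * (10 * K + 1))) * d * s by ring.
  rewrite alK /gpot.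
  have -> : al * (w * (w + d)) = al * w ^+ 2 + al * d * w by ring.
  by [].
have W0 : W != set0.
  apply/negP => /eqP W0; move: Sn0; rewrite -card_gt0 => hs.
  have : (#|S| <= #|W|)%N by apply: subset_leq_card; rewrite /W subsetUl.
  by rewrite W0 cards0 leqn0 => /eqP h0; move: hs; rewrite h0.
have [Y [Y0 hY cY]] := @grow R T e p al d se hp _ W (leqnn #|W|) W0 hg.
apply: ncd; exists Y, (Fi e Y); split; last split => //.
  split; first by move=> x y; rewrite /Fi se; case: (x \in Y); case: (y \in Y); rewrite ?andbF.
  split; first by move=> x y /and3P [].
  by move=> x y /and3P [_ -> ->].
pose y : R := (#|Y|)%:R.
have y0 : 0 < y by rewrite /y ltr0n card_gt0.
have hy : al * d * y <= y * y.
  have := eb_le_sq R e Y; rewrite -/y; move: hY; rewrite /gpot -/y => hY.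
  have : 0 <= al * y ^+ 2 by apply: mulr_ge0; [exact: ltW | exact: sqr_ge0].
  lra.
have : al * d <= y by rewrite -(ler_pM2r y0).
have : mu * d <= al * d by rewrite ler_wpM2r.
rewrite /y; lra.
Qed.
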